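(* Let $d$ be prime, $n\ge1$, $G$ invertible over $\mathbb Z_d$, and $\rho,\tau,\sigma,\rho_1,\rho_2,\sigma_1,\sigma_2$ be $n$-qudit states. (1) If $G$ is odd-parity positive, $\|\sigma\boxtimes\rho-\sigma\boxtimes\tau\|_{W_1}\le\|\rho-\tau\|_{W_1}$. (2) If $G$ is even-parity positive, $\|\rho\boxtimes\sigma-\tau\boxtimes\sigma\|_{W_1}\le\|\rho-\tau\|_{W_1}$. (3) If $G$ is positive, $\|\rho_1\boxtimes\sigma_1-\rho_2\boxtimes\sigma_2\|_{W_1}\le\|\rho_1-\rho_2\|_{W_1}+\|\sigma_1-\sigma_2\|_{W_1}$.
   Context: Fix a prime $d$. Let $G=\begin{pmatrix}g_{00}&g_{01}\\ g_{10}&g_{11}\end{pmatrix}$ over $\mathbb Z_d$ with $\det G\not\equiv0$, $N=(\det G)^{-1}$. $G$ is nontrivial if at most one entry is $0$ mod $d$; odd-parity positive if nontrivial and $g_{01},g_{10}\not\equiv0$; even-parity positive if nontrivial and $g_{00},g_{11}\not\equiv0$; positive if both. Key unitary on $(\mathbb C^d)^{\otimes n}\otimes(\mathbb C^d)^{\otimes n}$: $U|\vec i\rangle|\vec j\rangle=|Ng_{11}\vec i-Ng_{10}\vec j\rangle|-Ng_{01}\vec i+Ng_{00}\vec j\rangle$; convolution $\rho\boxtimes\sigma=\mathrm{Tr}_B[U(\rho\otimes\sigma)U^\dagger]$. The quantum Wasserstein distance of order 1 (De Palma–Marvian–Trevisan–Lloyd) is $\|\rho-\sigma\|_{W_1}=\min\{\sum_{i=1}^n|c_i|:\rho-\sigma=\sum_{i=1}^nc_i(\rho_i-\sigma_i),\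 \rho_i,\sigma_i\ n\text{-qudit states},\ \mathrm{Tr}_i\rho_i=\mathrm{Tr}_i\sigma_i\ \forall i\}$, where $\mathrm{Tr}_i$ is the partial trace over the $i$-th qudit. *)

(* Defs.v *)
From HB Require Import structures.
From mathcomp Require Import all_boot all_order all_algebra.
From mathcomp Require Import boolp classical_sets reals.
From mathcomp Require Import complex.
Set Implicit Arguments. Unset Strict Implicit. Unset Printing Implicit Defensive.
Import Order.TTheory GRing.Theory Num.Theory.
Local Open Scope ring_scope.

Notation qbasis d n := {ffun 'I_n -> 'F_d}.

Section QuditDefs.
Variable R : realType.
Local Notation C := (R[i]).

(* Computational basis labels of n qudits of dimension d: vectors in Z_d^n.
   For d prime, 'F_d is Z_d. *)

Definition op (T : finType) := T -> T -> C.

(* positive semidefinite: <v, A v> >= 0 for every vector v (order of C: real and >= 0) *)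
Definition psd (T : finType) (A : op T) : Prop :=
  forall v : T -> C, 0 <= \sum_(x : T) \sum_(y : T) Num.conj (v x) * A x y * v y.

Definition trace (T : finType) (A : op T) : C := \sum_(x : T) A x x.

Definition is_state (T : finType) (A : op T) : Prop := psd A /\ trace A = 1.

Definition qstate (d n : nat) (rho : op (qbasis d n)) : Prop := is_state rho.

(* Partial trace over the i-th qudit.  The result is an operator on the remaining
   n-1 qudits; we represent it as a function of full labels x y that does not depend
   on the i-th components x i, y i. *)
Definition ptrace (d n : nat) (i : 'I_n) (A : op (qbasis d n)) : op (qbasis d n) :=
  fun x y => \sum_(k : 'F_d)
     A [ffun j => if j == i then k else x j] [ffun j => if j == i then k else y j].

(* Quantum Wasserstein distance of order 1 (De Palma-Marvian-Trevisan-Lloyd),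
   applied to A = rho - sigma; the minimum is taken as an infimum (it is attained). *)
Definition W1 (d n : nat) (A : op (qbasis d n)) : R :=
  inf [set s : R | exists (c : 'I_n -> R) (rh sg : 'I_n -> op (qbasis d n)),
     (forall i, qstate (rh i) /\ qstate (sg i) /\ ptrace i (rh i) = ptrace i (sg i)) /\
     (forall x y, A x y = \sum_(i < n) real_complex R (c i) * (rh i x y - sg i x y)) /\
     s = \sum_(i < n) `|c i| ].

Definition op_sub (T : finType) (A B : op T) : op T := fun x y => A x y - B x y.

Definition tens (T : finType) (A B : op T) : op (T * T)%type :=
  fun x y => A x.1 y.1 * B x.2 y.2.

Definition keymap (d n : nat) (G : 'M['F_d]_2) (ij : qbasis d n * qbasis d n)
  : qbasis d n * qbasis d n :=
  let N := (\det G)^-1 in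
  ([ffun k => N * G 1 1 * ij.1 k - N * G 1 0 * ij.2 k],
   [ffun k => - N * G 0 1 * ij.1 k + N * G 0 0 * ij.2 k]).

Definition keyU (d n : nat) (G : 'M['F_d]_2) : op (qbasis d n * qbasis d n)%type :=
  fun a b => if a == keymap G b then 1 else 0.

Definition conjU (T : finType) (U X : op T) : op T :=
  fun a b => \sum_(c : T) \sum_(e : T) U a c * X c e * Num.conj (U b e).

Definition ptraceB (T : finType) (X : op (T * T)%type) : op T :=
  fun x y => \sum_(z : T) X (x, z) (y, z).

Definition qconv (d n : nat) (G : 'M['F_d]_2) (rho sigma : op (qbasis d n))
  : op (qbasis d n) :=
  ptraceB (conjU (@keyU d n G) (tens rho sigma)).

Definition nontrivialG (d : nat) (G : 'M['F_d]_2) : bool :=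
  (#|[set ij : 'I_2 * 'I_2 | G ij.1 ij.2 == 0%R]| <= 1)%N.
Definition odd_positive (d : nat) (G : 'M['F_d]_2) : bool :=
  [&& nontrivialG G, G 0 1 != 0 & G 1 0 != 0].
Definition even_positive (d : nat) (G : 'M['F_d]_2) : bool :=
  [&& nontrivialG G, G 0 0 != 0 & G 1 1 != 0].
Definition positiveG (d : nat) (G : 'M['F_d]_2) : bool :=
  odd_positive G && even_positive G.

End QuditDefs.

(* Main.v *)
Require Import Defs.
From HB Require Import structures.
From mathcomp Require Import all_boot all_order all_algebra.
From mathcomp Require Import boolp classical_sets reals complex ring.
Set Implicit Arguments. Unset Strict Implicit. Unset Printing Implicit Defensive.
Import Order.TTheory GRing.Theory Num.Theory.
Local Open Scope ring_scope.

Lemma sum_fiber (V : nmodType) (T X : finType) (M : X -> T) (H : T -> X -> V) :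
  \sum_t \sum_(x | M x == t) H t x = \sum_x H (M x) x.
Proof.
rewrite (exchange_big_dep xpredT) //=; apply: eq_bigr => x _.
by rewrite (big_pred1 (M x)) // => t; rewrite eq_sym.
Qed.

Section Psd.
Variable R : realType.
Local Notation C := (R[i]).

Definition qf (T : finType) (A : op R T) (u v : T -> C) : C :=
  \sum_x \sum_y (u x)^* * A x y * v y.

Lemma psd_pull (T X : finType) (A : op R T) (M : X -> T) (g : X -> C) :
  psd A -> psd (fun x y => (g x)^* * A (M x) (M y) * g y).
Proof.
move=> hA v; have := hA (fun t => \sum_(x | M x == t) g x * v x).
suff -> : \sum_x \sum_y ((\sum_(x0 | M x0 == x) g x0 * v x0)^* * A x y *
       \sum_(x0 | M x0 == y) g x0 * v x0) =
  \sum_x \sum_y (v x)^* * ((g x)^* * A (M x) (M y) * g y) * v y by [].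
have E : forall t t', (\sum_(x0 | M x0 == t) g x0 * v x0)^* * A t t' *
       \sum_(x0 | M x0 == t') g x0 * v x0 =
   \sum_(x | M x == t) \sum_(y | M y == t') (g x * v x)^* * A t t' * (g y * v y).
  move=> t t'; rewrite rmorph_sum !mulr_suml /=; apply: eq_bigr => x _.
  by rewrite mulr_sumr.
under eq_bigr do under eq_bigr do rewrite E.
under eq_bigr do rewrite exchange_big /=.
rewrite (sum_fiber M (fun t x => \sum_j \sum_(y | M y == j) (g x * v x)^* * A t j * (g y * v y))).
apply: eq_bigr => x _.
rewrite (sum_fiber M (fun t y => (g x * v x)^* * A (M x) t * (g y * v y))).
apply: eq_bigr => y _.
rewrite !rmorphM /=; ring.
Qed.

Lemma qfDl (T : finType) (A : op R T) u1 u2 v :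
  qf A (fun z => u1 z + u2 z) v = qf A u1 v + qf A u2 v.
Proof.
rewrite /qf -big_split; apply: eq_bigr => x _; rewrite -big_split.
by apply: eq_bigr => y _; rewrite rmorphD /=; ring.
Qed.

Lemma qfDr (T : finType) (A : op R T) u v1 v2 :
  qf A u (fun z => v1 z + v2 z) = qf A u v1 + qf A u v2.
Proof.
rewrite /qf -big_split; apply: eq_bigr => x _; rewrite -big_split.
by apply: eq_bigr => y _ /=; ring.
Qed.

Lemma qfZl (T : finType) (A : op R T) c u v :
  qf A (fun z => c * u z) v = c^* * qf A u v.
Proof.
rewrite /qf mulr_sumr; apply: eq_bigr => x _; rewrite mulr_sumr.
by apply: eq_bigr => y _; rewrite rmorphM /=; ring.
Qed.

Lemma qfZr (T : finType) (A : op R T) c u v :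
  qf A u (fun z => c * v z) = c * qf A u v.
Proof.
rewrite /qf mulr_sumr; apply: eq_bigr => x _; rewrite mulr_sumr.
by apply: eq_bigr => y _ /=; ring.
Qed.

Definition edelta (T : finType) (x : T) : T -> C := fun z => (z == x)%:R.

Lemma sum_delta (T : finType) (x : T) (F : T -> C) :
  \sum_z (z == x)%:R * F z = F x.
Proof.
rewrite (bigD1 x) //= eqxx mul1r big1 ?addr0 // => z /negbTE ->; by rewrite mul0r.
Qed.

Lemma sum_deltar (T : finType) (x : T) (F : T -> C) :
  \sum_z F z * (z == x)%:R = F x.
Proof. by under eq_bigr do rewrite mulrC; rewrite sum_delta. Qed.

Lemma qf_delta (T : finType) (A : op R T) x y :
  qf A (edelta x) (edelta y) = A x y.
Proof.
rewrite /qf /edelta; under eq_bigr do rewrite conjC_nat.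
under eq_bigr do under eq_bigr do rewrite -mulrA.
under eq_bigr do rewrite -mulr_sumr.
rewrite sum_delta.
by rewrite sum_deltar.
Qed.

Lemma qf_two (T : finType) (A : op R T) x y c :
  qf A (fun z => edelta x z + c * edelta y z) (fun z => edelta x z + c * edelta y z)
  = A x x + c * A x y + c^* * A y x + c^* * c * A y y.
Proof.
rewrite qfDl !qfDr qfZl !qfZr qfZl !qf_delta; ring.
Qed.

Lemma psd_herm (T : finType) (A : op R T) : psd A ->
  forall x y, A x y = (A y x)^*.
Proof.
move=> hA x y.
have rl : forall v, (qf A v v)^* = qf A v v.
  by move=> v; apply: geC0_conj; apply: hA.
have hx := rl (edelta x); rewrite qf_delta in hx.
have hy := rl (edelta y); rewrite qf_delta in hy.
have h1 := rl (fun z => edelta x z + 1 * edelta y z).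
have h2 := rl (fun z => edelta x z + 'i * edelta y z).
rewrite qf_two in h1; rewrite qf_two in h2.
rewrite !rmorphD !rmorphM /= ?conjC1 ?conjCK hx hy in h1.
rewrite !rmorphD !rmorphM /= !conjCK conjCi hx hy in h2.
set a := A x y in h1 h2 *; set b := A y x in h1 h2 *.
move/eqP: h1; rewrite -subr_eq0 => /eqP h1.
move/eqP: h2; rewrite -subr_eq0 => /eqP h2.
have E : 'i * 2 * (b - a^*) = 0.
  match type of h1 with ?X1 = 0 => match type of h2 with ?X2 = 0 =>
    have -> : 'i * 2 * (b - a^*) = X2 - 'i * X1 by ring end end.
  by rewrite h1 h2 mulr0 subr0.
move/eqP: E; rewrite !mulf_eq0 => /orP[/orP[|]|]; [by rewrite (negbTE (neq0Ci _))|by rewrite pnatr_eq0|rewrite subr_eq0 => /eqP ->].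
by rewrite conjCK.
Qed.


Lemma sum_enum (T : finType) (F : 'I_#|T| -> C) :
  \sum_(x : T) F (enum_rank x) = \sum_i F i.
Proof.
rewrite (reindex (@enum_val T xpredT)) /=; last first.
  by apply: onW_bij; apply: enum_val_bij.
by apply: eq_bigr => i _; rewrite enum_valK.
Qed.

Local Open Scope sesquilinear_scope.

Lemma psd_decomp (T : finType) (B : op R T) : psd B ->
  exists (m : nat) (w : 'I_m -> T -> C) (lam : 'I_m -> C),
    (forall k, 0 <= lam k) /\ forall x y, B x y = \sum_k (w k x)^* * lam k * w k y.
Proof.
move=> hB.
pose Bm : 'M[C]_#|T| := \matrix_(i, j) B (enum_val i) (enum_val j).
have Bh : Bm ^t* = Bm.
  apply/matrixP => i j; rewrite !mxE (psd_herm hB (enum_val i)).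
  done.
have Bn : Bm \is normalmx by rewrite qualifE Bh.
have := orthomx_spectralP Bn.
set P := spectralmx Bm; set sp := spectral_diag Bm => Bdec.
have Pu : P \is unitarymx by apply: spectral_unitarymx.
rewrite invmx_unitary // in Bdec.
have Bxy : forall x y, B x y = \sum_k ((P k (enum_rank x))^* * sp 0 k * P k (enum_rank y)).
  move=> x y.
  have -> : B x y = Bm (enum_rank x) (enum_rank y) by rewrite mxE !enum_rankK.
  rewrite Bdec mxE; apply: eq_bigr => k _.
  by rewrite mul_mx_diag !mxE.
have orth : forall k l, \sum_(x : T) P k (enum_rank x) * (P l (enum_rank x))^* = (k == l)%:R.
  move=> k l; rewrite (sum_enum (fun i => P k i * (P l i)^*)).
  have /unitarymxP U := Pu.
  have := congr1 (fun M : 'M[C]_#|T| => M k l) U; rewrite !mxE => <-.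
  by apply: eq_bigr => i _; rewrite !mxE.
exists #|T|, (fun k x => P k (enum_rank x)), (fun k => sp 0 k); split => //.
move=> k; have := hB (fun x => (P k (enum_rank x))^*).
suff -> : \sum_x \sum_y ((P k (enum_rank x))^*)^* * B x y * (P k (enum_rank y))^* = sp 0 k by [].
under eq_bigr do under eq_bigr do rewrite Bxy conjCK mulr_sumr mulr_suml.
under eq_bigr do rewrite exchange_big /=.
rewrite exchange_big /=.
rewrite (bigD1 k) //= [X in _ + X]big1 ?addr0; last first.
  move=> l lk.
  have -> : \sum_x \sum_y P k (enum_rank x) * ((P l (enum_rank x))^* * sp 0 l * P l (enum_rank y)) * (P k (enum_rank y))^*
    = sp 0 l * (\sum_x P k (enum_rank x) * (P l (enum_rank x))^*) * (\sum_y P l (enum_rank y) * (P k (enum_rank y))^*).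
    rewrite -mulrA big_distrl /= mulr_sumr; apply: eq_bigr => x _.
    rewrite !mulr_sumr; apply: eq_bigr => y _; ring.
  by rewrite orth eq_sym (negbTE lk) mulr0 mul0r.
have -> : \sum_x \sum_y P k (enum_rank x) * ((P k (enum_rank x))^* * sp 0 k * P k (enum_rank y)) * (P k (enum_rank y))^*
    = sp 0 k * (\sum_x P k (enum_rank x) * (P k (enum_rank x))^*) * (\sum_y P k (enum_rank y) * (P k (enum_rank y))^*).
  rewrite -mulrA big_distrl /= mulr_sumr; apply: eq_bigr => x _.
  rewrite !mulr_sumr; apply: eq_bigr => y _; ring.
by rewrite orth eqxx !mulr1.
Qed.
Local Close Scope sesquilinear_scope.

Lemma psd_ext (T : finType) (A B : op R T) :
  (forall x y, A x y = B x y) -> psd A -> psd B.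
Proof.
move=> e hA v; have := hA v.
suff -> : \sum_x \sum_y (v x)^* * A x y * v y = \sum_x \sum_y (v x)^* * B x y * v y by [].
by apply: eq_bigr => x _; apply: eq_bigr => y _; rewrite e.
Qed.

Lemma psd_sum (T I : finType) (F : I -> op R T) :
  (forall i, psd (F i)) -> psd (fun x y => \sum_i F i x y).
Proof.
move=> hF v.
have -> : \sum_x \sum_y (v x)^* * (\sum_i F i x y) * v y =
          \sum_i \sum_x \sum_y (v x)^* * F i x y * v y.
  rewrite [RHS]exchange_big /=; apply: eq_bigr => x _.
  rewrite [RHS]exchange_big /=; apply: eq_bigr => y _.
  by rewrite mulr_sumr mulr_suml.
by apply: sumr_ge0 => i _; apply: hF.
Qed.

Lemma psd_scale (T : finType) (A : op R T) (c : C) :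
  0 <= c -> psd A -> psd (fun x y => c * A x y).
Proof.
move=> c0 hA v.
have -> : \sum_x \sum_y (v x)^* * (c * A x y) * v y =
          c * \sum_x \sum_y (v x)^* * A x y * v y.
  rewrite mulr_sumr; apply: eq_bigr => x _.
  by rewrite mulr_sumr; apply: eq_bigr => y _; ring.
by apply: mulr_ge0 => //; apply: hA.
Qed.

Lemma psd_add (T : finType) (A B : op R T) :
  psd A -> psd B -> psd (fun x y => A x y + B x y).
Proof.
move=> hA hB v.
have -> : \sum_x \sum_y (v x)^* * (A x y + B x y) * v y =
          \sum_x \sum_y (v x)^* * A x y * v y + \sum_x \sum_y (v x)^* * B x y * v y.
  rewrite -big_split; apply: eq_bigr => x _.
  by rewrite -big_split; apply: eq_bigr => y _ /=; ring.
by apply: addr_ge0; [apply: hA | apply: hB].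
Qed.

Lemma tens_psd (T : finType) (A B : op R T) : psd A -> psd B -> psd (tens A B).
Proof.
move=> hA /psd_decomp [m [w [lam [l0 Be]]]].
apply: (@psd_ext _ (fun p q => \sum_k lam k *
   ((w k p.2)^* * A p.1 q.1 * w k q.2))).
  move=> p q; rewrite /tens Be mulr_sumr; apply: eq_bigr => k _; ring.
apply: psd_sum => k; apply: psd_scale => //.
exact: (psd_pull (fun p : T * T => p.1) (fun p => w k p.2) hA).
Qed.
End Psd.


Lemma det22 (F : comNzRingType) (G : 'M[F]_2) : \det G = G 0 0 * G 1 1 - G 0 1 * G 1 0.
Proof.
rewrite (expand_det_row _ 0) !big_ord_recl big_ord0 addr0.
rewrite /cofactor !det_mx11 !mxE /=.
have e1 : lift (0 : 'I_2) (0 : 'I_1) = 1 by apply: val_inj.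
have e2 : lift (lift (ord0 : 'I_2) (ord0 : 'I_1)) (0 : 'I_1) = 0 by apply: val_inj.
have e3 : lift (ord0 : 'I_2) (ord0 : 'I_1) = 1 by apply: val_inj.
rewrite e2 ?e1 ?e3 /bump /= expr0 expr1; ring.
Qed.

Section Conv.
Variable R : realType.
Local Notation C := (R[i]).
Variables (d n : nat).
Local Notation Q := (qbasis d n).

Definition L1 (G : 'M['F_d]_2) (x z : Q) : Q := [ffun j => G 0 0 * x j + G 1 0 * z j].
Definition L2 (G : 'M['F_d]_2) (x z : Q) : Q := [ffun j => G 0 1 * x j + G 1 1 * z j].
Definition Kinv (G : 'M['F_d]_2) (p : Q * Q) : Q * Q := (L1 G p.1 p.2, L2 G p.1 p.2).

Lemma KinvK (G : 'M['F_d]_2) : \det G != 0 -> cancel (keymap G) (Kinv G).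
Proof.
move=> dG [a b]; rewrite /Kinv /keymap /L1 /L2 /=; congr pair; apply/ffunP => j; rewrite !ffunE.
  have : (\det G)^-1 * \det G = 1 by rewrite mulVf.
  rewrite det22 => h; rewrite -[RHS]mul1r -h; ring.
have : (\det G)^-1 * \det G = 1 by rewrite mulVf.
rewrite det22 => h; rewrite -[RHS]mul1r -h; ring.
Qed.

Lemma keymapK (G : 'M['F_d]_2) : \det G != 0 -> cancel (Kinv G) (keymap G).
Proof.
move=> dG [a b]; rewrite /Kinv /keymap /L1 /L2 /=; congr pair; apply/ffunP => j; rewrite !ffunE.
  have : (\det G)^-1 * \det G = 1 by rewrite mulVf.
  rewrite det22 => h; rewrite -[RHS]mul1r -h; ring.
have : (\det G)^-1 * \det G = 1 by rewrite mulVf.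
rewrite det22 => h; rewrite -[RHS]mul1r -h; ring.
Qed.

Lemma ifE (b : bool) : (if b then 1 else 0 : C) = b%:R.
Proof. by case: b. Qed.

Lemma qconvE (G : 'M['F_d]_2) (s a : op R Q) x y : \det G != 0 ->
  qconv G s a x y = \sum_z tens s a (Kinv G (x, z)) (Kinv G (y, z)).
Proof.
move=> dG; rewrite /qconv /ptraceB /conjU /keyU; apply: eq_bigr => z _.
have eqk : forall p c, (p == keymap G c) = (c == Kinv G p).
  move=> p c; apply/eqP/eqP => [->|->]; [by rewrite KinvK | by rewrite keymapK].
under eq_bigr do under eq_bigr do rewrite !eqk !ifE conjC_nat -mulrA.
under eq_bigr do rewrite -mulr_sumr.
rewrite (sum_delta (Kinv G (x, z)) (fun c => \sum_e tens s a c e * (e == Kinv G (y, z))%:R)).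
by rewrite sum_deltar.
Qed.
End Conv.

Section Conv2.
Variable R : realType.
Local Notation C := (R[i]).
Variables (d n : nat).
Local Notation Q := (qbasis d n).
Variable G : 'M['F_d]_2.
Hypothesis dG : \det G != 0.

Lemma sum_pair (T U : finType) (F : T * U -> C) :
  \sum_p F p = \sum_a \sum_b F (a, b).
Proof. by rewrite pair_bigA; apply: eq_bigr => -[]. Qed.

Lemma Kinv_inj : injective (@Kinv d n G).
Proof. exact: (can_inj (keymapK dG)). Qed.

Lemma qconv_psd (s a : op R Q) : psd s -> psd a -> psd (qconv G s a).
Proof.
move=> hs ha.
apply: (psd_ext (A := fun x y => \sum_z (1 : C)^* * tens s a (Kinv G (x, z)) (Kinv G (y, z)) * 1)).
  by move=> x y; rewrite qconvE //; apply: eq_bigr => z _; rewrite conjC1 mul1r mulr1.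
apply: psd_sum => z.
exact: (psd_pull (fun x : Q => Kinv G (x, z)) (fun _ => 1) (tens_psd hs ha)).
Qed.

Lemma qconv_trace (s a : op R Q) : trace (qconv G s a) = trace s * trace a.
Proof.
rewrite /trace.
under eq_bigr do rewrite qconvE //.
rewrite -(sum_pair (fun p => tens s a (Kinv G p) (Kinv G p))).
have E : \sum_p tens s a p p = \sum_p tens s a (Kinv G p) (Kinv G p).
  exact: (reindex_inj Kinv_inj).
rewrite -E.
rewrite sum_pair big_distrl /=; apply: eq_bigr => u _.
by rewrite big_distrr.
Qed.

Lemma qconv_state (s a : op R Q) : is_state s -> is_state a -> is_state (qconv G s a).
Proof.
move=> [hs ts] [ha ta]; split; first exact: qconv_psd.
by rewrite qconv_trace ts ta mul1r.
Qed.

Lemma qconv_lin (I : finType) (s A : op R Q) (c : I -> C) (B : I -> op R Q) :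
  (forall x y, A x y = \sum_i c i * B i x y) ->
  forall x y, qconv G s A x y = \sum_i c i * qconv G s (B i) x y.
Proof.
move=> e x y; rewrite qconvE //.
under [RHS]eq_bigr do rewrite qconvE // mulr_sumr.
rewrite [RHS]exchange_big /=; apply: eq_bigr => z _.
rewrite /tens e mulr_sumr; apply: eq_bigr => i _; ring.
Qed.

Lemma qconv_sub (s a b : op R Q) x y :
  op_sub (qconv G s a) (qconv G s b) x y = qconv G s (op_sub a b) x y.
Proof.
rewrite /op_sub !qconvE // -sumrB; apply: eq_bigr => z _.
rewrite /tens; ring.
Qed.

Definition upd (x : Q) (i : 'I_n) (c : 'F_d) : Q :=
  [ffun j => if j == i then c else x j].

Lemma ptraceE (A : op R Q) i x y : ptrace i A x y = \sum_c A (upd x i c) (upd y i c).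
Proof. by []. Qed.


Lemma detN : (\det G)^-1 * \det G = 1.
Proof. by rewrite mulVf. Qed.

Lemma qconv_ptrace (s a : op R Q) i x y :
  ptrace i (qconv G s a) x y =
  \sum_w s (upd (L1 G x w) i (w i)) (upd (L1 G y w) i (w i)) *
         ptrace i a (L2 G x w) (L2 G y w).
Proof.
rewrite ptraceE.
under eq_bigr do rewrite qconvE //.
rewrite -(sum_pair (fun p => tens s a (Kinv G (upd x i p.1, p.2)) (Kinv G (upd y i p.1, p.2)))) /=.
pose N := (\det G)^-1.
pose Psi := fun q : 'F_d * Q =>
  (N * (G 1 1 * q.2 i - G 1 0 * q.1), upd q.2 i (N * (- G 0 1 * q.2 i + G 0 0 * q.1))).
pose Phi := fun p : 'F_d * Q =>
  (G 0 1 * p.1 + G 1 1 * p.2 i, upd p.2 i (G 0 0 * p.1 + G 1 0 * p.2 i)).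
have hN : N * (G 0 0 * G 1 1 - G 0 1 * G 1 0) = 1 by rewrite /N -det22 mulVf.
have i1 : forall u b : 'F_d, G 0 0 * (N * (G 1 1 * u - G 1 0 * b)) +
     G 1 0 * (N * (- G 0 1 * u + G 0 0 * b)) = u.
  by move=> u b; rewrite -[RHS]mul1r -hN; ring.
have i2 : forall u b : 'F_d, G 0 1 * (N * (G 1 1 * u - G 1 0 * b)) +
     G 1 1 * (N * (- G 0 1 * u + G 0 0 * b)) = b.
  by move=> u b; rewrite -[RHS]mul1r -hN; ring.
have PsiK : cancel Psi Phi.
  move=> [b w]; rewrite /Psi /Phi /= !ffunE eqxx i2; congr pair.
  by apply/ffunP => j; rewrite !ffunE; case: eqP => [->|_] //; rewrite i1.
have Psi_inj : injective Psi by apply: can_inj PsiK.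
have E := reindex_inj (op := +%R) (x := 0 : C) (P := xpredT)
   (F := fun p : 'F_d * Q => tens s a (Kinv G (upd x i p.1, p.2)) (Kinv G (upd y i p.1, p.2)))
   Psi_inj.
rewrite /= in E; rewrite E {E}.
have eL1 : forall (v w : Q) (b : 'F_d), L1 G (upd v i (Psi (b, w)).1) (Psi (b, w)).2 = upd (L1 G v w) i (w i).
  move=> v w b; apply/ffunP => j; rewrite /Psi /= !ffunE.
  by case: eqP => _; [rewrite i1|].
have eL2 : forall (v w : Q) (b : 'F_d), L2 G (upd v i (Psi (b, w)).1) (Psi (b, w)).2 = upd (L2 G v w) i b.
  move=> v w b; apply/ffunP => j; rewrite /Psi /= !ffunE.
  by case: eqP => _; [rewrite i2|].
rewrite sum_pair exchange_big /=; apply: eq_bigr => w _.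
rewrite ptraceE mulr_sumr; apply: eq_bigr => b _.
by rewrite /tens /Kinv /= !eL1 !eL2.
Qed.
End Conv2.

Section Swap.
Variable R : realType.
Variables (d n : nat).
Local Notation Q := (qbasis d n).

Definition Gsw (G : 'M['F_d]_2) : 'M['F_d]_2 :=
  \matrix_(i, j) G i (if j == 0 then 1 else 0).

Lemma det_Gsw G : \det (Gsw G) = - \det G.
Proof. by rewrite !det22 !mxE /=; ring. Qed.

Lemma Gsw_det G : \det G != 0 -> \det (Gsw G) != 0.
Proof. by rewrite det_Gsw oppr_eq0. Qed.

Lemma L1_Gsw G (x z : Q) : L1 (Gsw G) x z = L2 G x z.
Proof. by apply/ffunP => j; rewrite !ffunE !mxE. Qed.

Lemma L2_Gsw G (x z : Q) : L2 (Gsw G) x z = L1 G x z.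
Proof. by apply/ffunP => j; rewrite !ffunE !mxE. Qed.

Lemma qconv_swap G (s a : op R Q) x y : \det G != 0 ->
  qconv G s a x y = qconv (Gsw G) a s x y.
Proof.
move=> dG; rewrite !qconvE //; last exact: Gsw_det.
apply: eq_bigr => z _; rewrite /tens /Kinv /= !L1_Gsw !L2_Gsw mulrC //.
Qed.
End Swap.

Section Wass.
Variable R : realType.
Local Notation C := (R[i]).
Variables (d n : nat).
Local Notation Q := (qbasis d n).

Definition Wset (A : op R Q) : set R :=
  [set s : R | exists (c : 'I_n -> R) (rh sg : 'I_n -> op R (qbasis d n)),
     (forall i, qstate (rh i) /\ qstate (sg i) /\ ptrace i (rh i) = ptrace i (sg i)) /\
     (forall x y, A x y = \sum_(i < n) real_complex R (c i) * (rh i x y - sg i x y)) /\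
     s = \sum_(i < n) `|c i| ].

Lemma W1E (A : op R Q) : W1 A = inf (Wset A).
Proof. by []. Qed.

Lemma Wset_ge0 (A : op R Q) s : Wset A s -> 0 <= s.
Proof.
by move=> [c [rh [sg [_ [_ ->]]]]]; apply: sumr_ge0 => i _; apply: normr_ge0.
Qed.

Lemma Wset_lb (A : op R Q) : has_lbound (Wset A).
Proof. by exists 0 => s /Wset_ge0. Qed.

Lemma W1_le (A : op R Q) s : Wset A s -> W1 A <= s.
Proof. by move=> hs; rewrite W1E; apply: (ge_inf (Wset_lb A)). Qed.

Lemma W1_contract (A B : op R Q) :
  (Wset A !=set0)%classic -> (forall s, Wset A s -> exists2 s', Wset B s' & s' <= s) ->
  W1 B <= W1 A.
Proof.
move=> ne h; rewrite [W1 A]W1E; apply: lb_le_inf => // s /h [s' hs' le].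
by apply: le_trans le; apply: W1_le.
Qed.

Lemma W1_subadd (A B D : op R Q) :
  (Wset A !=set0)%classic -> (Wset B !=set0)%classic ->
  (forall s s', Wset A s -> Wset B s' -> exists2 s'', Wset D s'' & s'' <= s + s') ->
  W1 D <= W1 A + W1 B.
Proof.
move=> neA neB h.
rewrite -lerBlDr [W1 A]W1E; apply: lb_le_inf => // s hs.
rewrite lerBlDr addrC -lerBlDr [W1 B]W1E; apply: lb_le_inf => // s' hs'.
rewrite lerBlDr addrC; have [s'' hs'' le] := h s s' hs hs'.
by apply: le_trans le; apply: W1_le.
Qed.

Lemma Wset_ext (A B : op R Q) s : (forall x y, A x y = B x y) -> Wset A s -> Wset B s.
Proof.
move=> e [c [rh [sg [h1 [h2 h3]]]]]; exists c, rh, sg; split => //; split => //.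
by move=> x y; rewrite -e.
Qed.

End Wass.

Section Trans.
Variable R : realType.
Local Notation C := (R[i]).
Variables (d n : nat).
Local Notation Q := (qbasis d n).

Lemma Wset_conv (G : 'M['F_d]_2) (sg0 rho tau : op R Q) s : \det G != 0 -> qstate sg0 ->
  Wset (op_sub rho tau) s -> Wset (op_sub (qconv G sg0 rho) (qconv G sg0 tau)) s.
Proof.
move=> dG hs [c [rh [sg [h1 [h2 h3]]]]].
exists c, (fun i => qconv G sg0 (rh i)), (fun i => qconv G sg0 (sg i)); split; last split => //.
  move=> i; have [r1 [r2 r3]] := h1 i; split; first exact: qconv_state.
  split; first exact: qconv_state.
  apply/funext => x; apply/funext => y; rewrite !qconv_ptrace //.
  by apply: eq_bigr => w _; rewrite r3.
move=> x y; rewrite qconv_sub //.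
rewrite (@qconv_lin R d n G dG _ sg0 (op_sub rho tau) (fun i => real_complex R (c i)) (fun i => op_sub (rh i) (sg i)) h2).
by apply: eq_bigr => i _; rewrite -qconv_sub.
Qed.

Lemma ptrace_lin (i : 'I_n) (A B : op R Q) (p q : C) x y :
  ptrace i (fun u v => p * A u v + q * B u v) x y = p * ptrace i A x y + q * ptrace i B x y.
Proof. by rewrite !ptraceE big_split /= -!mulr_sumr. Qed.

Lemma trace_lin (A B : op R Q) (p q : C) :
  trace (fun u v => p * A u v + q * B u v) = p * trace A + q * trace B.
Proof. by rewrite /trace big_split /= -!mulr_sumr. Qed.

Lemma state_comb (A B : op R Q) (p q : C) : 0 <= p -> 0 <= q -> p + q = 1 ->
  qstate A -> qstate B -> qstate (fun u v => p * A u v + q * B u v).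
Proof.
move=> p0 q0 pq [hA tA] [hB tB]; split.
  by apply: psd_add; apply: psd_scale.
by rewrite trace_lin tA tB !mulr1.
Qed.

Lemma Wset_merge (A B : op R Q) s s' : Wset A s -> Wset B s' ->
  Wset (fun x y => A x y + B x y) (s + s').
Proof.
move=> [c1 [r1 [s1 [h1 [e1 ->]]]]] [c2 [r2 [s2 [h2 [e2 ->]]]]].
pose m i := `|c1 i| + `|c2 i|.
pose p i := if m i == 0 then 2^-1 else `|c1 i| / m i.
pose q i := 1 - p i.
pose R1 i := if 0 <= c1 i then r1 i else s1 i.
pose S1 i := if 0 <= c1 i then s1 i else r1 i.
pose R2 i := if 0 <= c2 i then r2 i else s2 i.
pose S2 i := if 0 <= c2 i then s2 i else r2 i.
have m0 : forall i, 0 <= m i by move=> i; apply: addr_ge0.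
have mp : forall i, m i * p i = `|c1 i|.
  move=> i; rewrite /p; case: eqP => [m00|mn0].
    rewrite m00 mul0r; move/eqP: m00; rewrite /m paddr_eq0 // => /andP[/eqP -> _].
    by [].
  by rewrite mulrC divfK //; apply/eqP.
have mq : forall i, m i * q i = `|c2 i|.
  by move=> i; rewrite /q mulrBr mulr1 mp /m addrC addKr.
have p0 : forall i, 0 <= p i.
  move=> i; rewrite /p; case: eqP => _; first by rewrite invr_ge0.
  by apply: divr_ge0.
have q0 : forall i, 0 <= q i.
  move=> i; case: (ltrgt0P (m i)) => [mpos||m00].
  - by rewrite -(pmulr_rge0 _ mpos) mq.
  - by move=> mneg; have := m0 i; rewrite leNgt mneg.
  - rewrite /q /p m00 eqxx subr_ge0 invf_le1 //; by rewrite ler1n.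
have R1S1 : forall i x y, real_complex R `|c1 i| * (R1 i x y - S1 i x y) =
                          real_complex R (c1 i) * (r1 i x y - s1 i x y).
  move=> i x y; rewrite /R1 /S1; case: ifP => h; first by rewrite ger0_norm.
  rewrite ltr0_norm ?ltNge ?h // rmorphN /=; ring.
have R2S2 : forall i x y, real_complex R `|c2 i| * (R2 i x y - S2 i x y) =
                          real_complex R (c2 i) * (r2 i x y - s2 i x y).
  move=> i x y; rewrite /R2 /S2; case: ifP => h; first by rewrite ger0_norm.
  rewrite ltr0_norm ?ltNge ?h // rmorphN /=; ring.
exists m, (fun i u v => real_complex R (p i) * R1 i u v + real_complex R (q i) * R2 i u v),
          (fun i u v => real_complex R (p i) * S1 i u v + real_complex R (q i) * S2 i u v).
split; last split.
- move=> i; have [a1 [b1 t1]] := h1 i; have [a2 [b2 t2]] := h2 i.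
  have pq : real_complex R (p i) + real_complex R (q i) = 1.
    by rewrite -rmorphD /= /q addrC subrK rmorph1.
  have pp : 0 <= real_complex R (p i) by rewrite ler0c.
  have qq : 0 <= real_complex R (q i) by rewrite ler0c.
  have qR1 : qstate (R1 i) by rewrite /R1; case: ifP.
  have qR2 : qstate (R2 i) by rewrite /R2; case: ifP.
  have qS1 : qstate (S1 i) by rewrite /S1; case: ifP.
  have qS2 : qstate (S2 i) by rewrite /S2; case: ifP.
  split; first by apply: state_comb.
  split; first by apply: state_comb.
  apply/funext => x; apply/funext => y; rewrite !ptrace_lin.
  have -> : ptrace i (R1 i) = ptrace i (S1 i) by rewrite /R1 /S1; case: ifP.
  by have -> : ptrace i (R2 i) = ptrace i (S2 i) by rewrite /R2 /S2; case: ifP.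
- move=> x y; rewrite e1 e2 -big_split /=; apply: eq_bigr => i _.
  rewrite -R1S1 -R2S2 -(mp i) -(mq i) !rmorphM /=; ring.
- rewrite -big_split /=; apply: eq_bigr => i _.
  by rewrite (ger0_norm (m0 i)).
Qed.

End Trans.

Section Hybrid.
Variable R : realType.
Local Notation C := (R[i]).
Variables (d n : nat).
Local Notation Q := (qbasis d n).

Lemma upd_upd (x : Q) i c e : upd (upd x i c) i e = upd x i e.
Proof. by apply/ffunP => j; rewrite !ffunE; case: eqP. Qed.

Lemma upd_id (x : Q) i : upd x i (x i) = x.
Proof. by apply/ffunP => j; rewrite !ffunE; case: eqP => [->|]. Qed.

Lemma upd_at (x : Q) i c : upd x i c i = c.
Proof. by rewrite ffunE eqxx. Qed.

Lemma sum_upd (i : 'I_n) (F : Q -> C) :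
  \sum_c \sum_x F (upd x i c) = #|'F_d|%:R * \sum_x F x.
Proof.
rewrite -(sum_pair (fun p : 'F_d * Q => F (upd p.2 i p.1))).
pose phi := fun p : 'F_d * Q => (p.2 i, upd p.2 i p.1).
have phiK : cancel phi phi.
  by move=> [c x]; rewrite /phi /= upd_at upd_upd upd_id.
have E := reindex_inj (op := +%R) (x := 0 : C) (P := xpredT)
   (F := fun p : 'F_d * Q => F (upd p.2 i p.1)) (can_inj phiK).
rewrite /= in E; rewrite E {E} sum_pair /phi /=.
under eq_bigr do under eq_bigr do rewrite upd_upd upd_id.
by rewrite sumr_const card_ord mulr_natl.
Qed.

Lemma sum_ptrace (i : 'I_n) (A : op R Q) :
  \sum_x ptrace i A x x = #|'F_d|%:R * trace A.
Proof.
rewrite /trace -(sum_upd i (fun z => A z z)) exchange_big /=.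
by apply: eq_bigr => c _.
Qed.


Definition eqk (k : nat) (s x : Q) : bool := [forall j : 'I_n, (j < k)%N ==> (x j == s j)].
Definition merge (k : nat) (t x : Q) : Q := [ffun j : 'I_n => if (j < k)%N then t j else x j].
Definition ind (b : bool) : C := b%:R.

Definition raw (k : nat) (A : op R Q) : op R Q := fun x y =>
  \sum_s \sum_t (ind (eqk k s x))^* * A (merge k t x) (merge k t y) * ind (eqk k s y).

Lemma raw_psd k A : psd A -> psd (raw k A).
Proof.
move=> hA; apply: psd_sum => s; apply: psd_sum => t.
exact: (psd_pull (merge k t) (fun x => ind (eqk k s x)) hA).
Qed.

Lemma eqk_n (s x : Q) : eqk n s x = (x == s).
Proof.
apply/forallP/eqP => [h|->]; last by move=> j; rewrite eqxx implybT.
by apply/ffunP => j; have := h j; rewrite ltn_ord /= => /eqP.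
Qed.

Lemma merge_n (t x : Q) : merge n t x = t.
Proof. by apply/ffunP => j; rewrite ffunE ltn_ord. Qed.

Lemma eqk_0 (s x : Q) : eqk 0 s x.
Proof. by apply/forallP => j. Qed.

Lemma merge_0 (t x : Q) : merge 0 t x = x.
Proof. by apply/ffunP => j; rewrite ffunE. Qed.

Lemma raw_n (A : op R Q) x y : raw n A x y = (x == y)%:R * trace A.
Proof.
rewrite /raw /trace.
under eq_bigr do under eq_bigr do rewrite !eqk_n !merge_n /ind conjC_nat.
under eq_bigr do under eq_bigr do rewrite mulrAC -mulrA.
under eq_bigr do rewrite -mulr_sumr -mulr_sumr.
under eq_bigr do rewrite [x == _]eq_sym.
by rewrite (sum_delta x (fun s => (y == s)%:R * \sum_t A t t)) /= eq_sym.
Qed.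

Lemma raw_0 (A : op R Q) x y : raw 0 A x y = (#|Q| * #|Q|)%:R * A x y.
Proof.
rewrite /raw.
under eq_bigr do under eq_bigr do rewrite !eqk_0 !merge_0 /ind conjC_nat mul1r mulr1.
by rewrite sumr_const sumr_const -mulrnA mulr_natl.
Qed.

Lemma eqk_upd_lt (i : 'I_n) s x c : eqk i s (upd x i c) = eqk i s x.
Proof.
apply: eq_forallb => j; rewrite ffunE; case: (ltnP j i) => //= lt.
by have -> : (j == i) = false by apply/negbTE; rewrite neq_ltn lt.
Qed.

Lemma merge_upd (i : 'I_n) t x c : merge i t (upd x i c) = merge i.+1 (upd t i c) x.
Proof.
apply/ffunP => j; rewrite !ffunE.
case: (ltngtP j i) => [lt|gt|eq].
- have h1 : (j < i.+1)%N by rewrite ltnS ltnW.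
  have h2 : (j == i) = false by apply/negbTE; rewrite neq_ltn lt.
  by rewrite h1 h2.
- have h1 : (j < i.+1)%N = false by rewrite ltnS leqNgt gt.
  have h2 : (j == i) = false by apply/negbTE; rewrite neq_ltn gt orbT.
  by rewrite h1 h2.
- have h1 : (j < i.+1)%N by rewrite eq ltnSn.
  have h2 : (j == i) by apply/eqP/val_inj.
  by rewrite h1 h2.
Qed.

Lemma merge_upd2 (i : 'I_n) t x c : merge i.+1 t (upd x i c) = merge i.+1 t x.
Proof.
apply/ffunP => j; rewrite !ffunE.
case: (ltngtP j i) => [lt|gt|eq].
- by have -> : (j < i.+1)%N by rewrite ltnS ltnW.
- have h1 : (j < i.+1)%N = false by rewrite ltnS leqNgt gt.
  have h2 : (j == i) = false by apply/negbTE; rewrite neq_ltn gt orbT.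
  by rewrite h1 h2.
- by have -> : (j < i.+1)%N by rewrite eq ltnSn.
Qed.

Lemma eqk_upd_S (i : 'I_n) s x c : eqk i.+1 s (upd x i c) = eqk i s x && (c == s i).
Proof.
apply/forallP/andP => [h|[/forallP h1 /eqP h2] j].
  split.
    apply/forallP => j; apply/implyP => lt; have := h j; rewrite ltnS (ltnW lt) /= ffunE.
    by have -> : (j == i) = false by apply/negbTE; rewrite neq_ltn lt.
  by have := h i; rewrite ltnS leqnn /= ffunE eqxx.
apply/implyP; rewrite ltnS leq_eqVlt ffunE => /orP[/eqP eq|lt].
  have -> : j = i by apply/val_inj.
  by rewrite eqxx h2.
have -> : (j == i) = false by apply/negbTE; rewrite neq_ltn lt.
by have := h1 j; rewrite lt.
Qed.

Lemma ind_and (a b e : bool) (P : C) :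
  (ind (a && e))^* * P * ind (b && e) = ind e * ((ind a)^* * P * ind b).
Proof.
rewrite /ind !conjC_nat; case: a; case: b; case: e => /=; ring.
Qed.

Lemma raw_ptrace (i : 'I_n) (A : op R Q) x y :
  ptrace i (raw i A) x y = #|'F_d|%:R * ptrace i (raw i.+1 A) x y.
Proof.
rewrite !ptraceE /raw.
under eq_bigr do under eq_bigr do under eq_bigr do rewrite !eqk_upd_lt !merge_upd.
rewrite exchange_big /=.
under eq_bigr do rewrite (sum_upd i (fun t => (ind (eqk i _ x))^* * A (merge i.+1 t x) (merge i.+1 t y) * ind (eqk i _ y))).
rewrite -mulr_sumr; congr (_ * _).
under [RHS]eq_bigr do under eq_bigr do under eq_bigr do rewrite !eqk_upd_S !merge_upd2 ind_and.
under [RHS]eq_bigr do under eq_bigr do rewrite -mulr_sumr.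
rewrite [RHS]exchange_big /=; apply: eq_bigr => s _.
by rewrite /ind (sum_delta (s i)).
Qed.

Definition ck (k : nat) : C := (#|'F_d| ^ (n - k) * #|Q|)%:R.

Lemma cardF_neq0 : (#|'F_d|%:R : C) != 0.
Proof. by rewrite card_ord pnatr_eq0. Qed.

Lemma ck_neq0 k : ck k != 0.
Proof.
rewrite /ck pnatr_eq0 muln_eq0 negb_or expn_eq0 card_ord /=.
by rewrite -lt0n; apply/card_gt0P; exists 0.
Qed.

Lemma raw_trace_S (i : 'I_n) (A : op R Q) :
  trace (raw i A) = #|'F_d|%:R * trace (raw i.+1 A).
Proof.
apply: (mulfI cardF_neq0); rewrite -(sum_ptrace i (raw i A)) -(sum_ptrace i (raw i.+1 A)).
by rewrite mulr_sumr; apply: eq_bigr => x _; rewrite raw_ptrace.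
Qed.

Lemma raw_trace (A : op R Q) m : forall k, (k + m = n)%N ->
  trace (raw k A) = ck k * trace A.
Proof.
elim: m => [|m IH] k hk.
  rewrite addn0 in hk; subst k.
  rewrite /trace; under eq_bigr do rewrite raw_n eqxx mul1r.
  by rewrite sumr_const /ck subnn expn0 mul1n mulr_natl.
have lt : (k < n)%N by rewrite -hk addnS ltnS leq_addr.
rewrite (raw_trace_S (Ordinal lt)) /= (IH k.+1) ?addSnnS //.
rewrite mulrA /ck -natrM mulnA -expnS; congr ((_ ^ _ * _)%:R * _).
by rewrite subnSK.
Qed.

Definition hyb (k : nat) (A : op R Q) : op R Q := fun x y => (ck k)^-1 * raw k A x y.

Lemma hyb_state k (A : op R Q) : (k <= n)%N -> qstate A -> qstate (hyb k A).
Proof.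
move=> kn [hA tA]; split.
  apply: psd_scale; last exact: raw_psd.
  by rewrite invr_ge0 /ck ler0n.
have -> : trace (hyb k A) = (ck k)^-1 * trace (raw k A) by rewrite /trace mulr_sumr.
rewrite (@raw_trace A (n - k) k); last by rewrite subnKC.
by rewrite tA mulr1 (mulVf (ck_neq0 k)).
Qed.

Lemma hyb_ptrace (i : 'I_n) (A : op R Q) : ptrace i (hyb i A) = ptrace i (hyb i.+1 A).
Proof.
apply/funext => x; apply/funext => y.
rewrite !ptraceE -!mulr_sumr -!ptraceE raw_ptrace mulrA; congr (_ * _).
have : ck i = #|'F_d|%:R * ck i.+1.
  by rewrite /ck -natrM mulnA -expnS subnSK.
move=> ->; rewrite invfM mulrAC (mulVf cardF_neq0) mul1r.
by [].
Qed.

Lemma hyb_n (A : op R Q) x y : trace A = 1 -> hyb n A x y = (ck n)^-1 * (x == y)%:R.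
Proof. by move=> tA; rewrite /hyb raw_n tA mulr1. Qed.

Lemma hyb_0 (A : op R Q) x y : hyb 0 A x y = A x y.
Proof.
rewrite /hyb raw_0 /ck subn0.
have -> : (#|'F_d| ^ n = #|Q|)%N by rewrite card_ffun !card_ord.
have Q0 : ((#|Q| * #|Q|)%:R : C) != 0.
  by rewrite pnatr_eq0 muln_eq0 orbb -lt0n; apply/card_gt0P; exists [ffun=> 0].
by rewrite mulrA (mulVf Q0) mul1r.
Qed.
End Hybrid.

Section Final.
Variable R : realType.
Local Notation C := (R[i]).
Variables (d n : nat).
Local Notation Q := (qbasis d n).

Lemma half_half : (2^-1 + 2^-1 : C) = 1.
Proof. have -> : (2^-1 + 2^-1 : C) = 2 * 2^-1 by ring. by rewrite mulfV // pnatr_eq0. Qed.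

Lemma Wset_nonempty (rho tau : op R Q) : qstate rho -> qstate tau ->
  (Wset (op_sub rho tau) !=set0)%classic.
Proof.
move=> hr ht.
have h2 : (0 : C) <= 2^-1 by rewrite invr_ge0 ler0n.
exists (\sum_(i < n) `|2 : R|), (fun _ => 2),
  (fun i u v => 2^-1 * hyb i rho u v + 2^-1 * hyb i.+1 tau u v),
  (fun i u v => 2^-1 * hyb i.+1 rho u v + 2^-1 * hyb i tau u v).
split; last split => //.
  move=> i; have li : (i <= n)%N by apply: ltnW.
  have lS : (i.+1 <= n)%N by [].
  split; first by apply: state_comb => //; [exact: half_half | exact: hyb_state | exact: hyb_state].
  split; first by apply: state_comb => //; [exact: half_half | exact: hyb_state | exact: hyb_state].
  apply/funext => x; apply/funext => y; rewrite !ptrace_lin.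
  by rewrite (hyb_ptrace i rho) (hyb_ptrace i tau) addrC.
move=> x y.
pose f k := hyb k rho x y - hyb k tau x y.
have E : forall i : 'I_n, real_complex R 2 * (2^-1 * hyb i rho x y + 2^-1 * hyb i.+1 tau x y -
      (2^-1 * hyb i.+1 rho x y + 2^-1 * hyb i tau x y)) = - (f i.+1 - f i).
  move=> i; rewrite rmorph_nat /f.
  have h : (2 : C) * 2^-1 = 1 by rewrite mulfV // pnatr_eq0.
  rewrite mulrBr !mulrDr !mulrA h !mul1r /hyb; ring.
under eq_bigr do rewrite E.
rewrite sumrN -(big_mkord (fun _ => true) (fun k => f k.+1 - f k)) telescope_sumr // opprB.
have fn : f n = 0.
  by rewrite /f (hyb_n x y hr.2) (hyb_n x y ht.2) subrr.
by rewrite fn subr0 /f !hyb_0.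
Qed.

End Final.

Unset Implicit Arguments.

Theorem mainTheorem9 (R : realType) (d n : nat) (G : 'M['F_d]_2)
  (rho tau sigma rho1 rho2 sigma1 sigma2 : op R (qbasis d n)) :
  prime d -> (1 <= n)%N -> \det G != 0 ->
  qstate rho -> qstate tau -> qstate sigma -> qstate rho1 -> qstate rho2 ->
  qstate sigma1 -> qstate sigma2 ->
  (odd_positive G ->
     W1 (op_sub (qconv G sigma rho) (qconv G sigma tau)) <= W1 (op_sub rho tau)) /\
  (even_positive G ->
     W1 (op_sub (qconv G rho sigma) (qconv G tau sigma)) <= W1 (op_sub rho tau)) /\
  (positiveG G ->
     W1 (op_sub (qconv G rho1 sigma1) (qconv G rho2 sigma2))
       <= W1 (op_sub rho1 rho2) + W1 (op_sub sigma1 sigma2)).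
Proof.
move=> _ _ dG hr ht hs hr1 hr2 hs1 hs2.
have dGs := Gsw_det dG.
have first : forall (a b s0 : op R (qbasis d n)) s, qstate s0 ->
    Wset (op_sub a b) s -> Wset (op_sub (qconv G a s0) (qconv G b s0)) s.
  move=> a b s0 s h0 hw.
  apply: (Wset_ext (A := op_sub (qconv (Gsw G) s0 a) (qconv (Gsw G) s0 b))).
    by move=> x y; rewrite /op_sub !(qconv_swap _ _ _ _ dG).
  exact: Wset_conv.
split; last split.
- move=> _; apply: W1_contract; first exact: Wset_nonempty.
  by move=> s hw; exists s => //; apply: Wset_conv.
- move=> _; apply: W1_contract; first exact: Wset_nonempty.
  by move=> s hw; exists s => //; apply: first.
- move=> _; apply: W1_subadd; [exact: Wset_nonempty | exact: Wset_nonempty |].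
  move=> s s' hw hw'; exists (s + s') => //.
  apply: (Wset_ext (A := fun x y => op_sub (qconv G rho1 sigma1) (qconv G rho2 sigma1) x y +
                                     op_sub (qconv G rho2 sigma1) (qconv G rho2 sigma2) x y)).
    by move=> x y; rewrite /op_sub addrA subrK.
  apply: Wset_merge; first exact: first.
  exact: Wset_conv.
Qed.
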